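(* For all program states $(s,h)$ and all $f\in\mathbb{T}$, $$\mathsf{ert}[\![\langle e\rangle:=e']\!](f)(s,h)=\begin{cases} f(s,h[s(e)\mapsto s(e')]) & \text{if } s(e)\in\mathrm{dom}(h),\\ \infty & \text{if } s(e)\notin\mathrm{dom}(h),\end{cases}$$ where $\mathsf{ert}[\![\langle e\rangle:=e']\!](f)=[e\mapsto-]\oplus([e\mapsto e']\mathbin{-\!\!\ominus} f)$.
   Context: Fix a finite set $\mathrm{Vars}$ of variables. A stack is $s\colon\mathrm{Vars}\to\mathbb{N}$; a heap is a partial map $h$ from a finite set $\mathrm{dom}(h)\subseteq\mathbb{N}_{>0}$ to $\mathbb{N}$; $h_1\perp h_2$ means disjoint domains, and then $h_1\star h_2$ is their union; $h[\ell\mapsto v]$ (for $\ell\in\mathrm{dom}(h)$) is the heap updated at $\ell$. $\mathsf{States}$ is the set of pairs $(s,h)$; $s(e)$ is the value of a heap-independent arithmetic expression $e$. $\mathbb{T}$ is the set of functions $\mathsf{States}\to[0,\infty]$. Truncated subtraction: $a\dot- b=\max(a-b,0)$, $\infty\dot- b=\infty$ for finite $b$, $a\dot-\infty=0$. $(f\oplus g)(s,h)=\min\{f(s,h_1)+g(s,h_2)\mid h=h_1\star h_2\}$; $(f\mathbin{-\!\!\ominus} g)(s,h)=\sup\{g(s,h\star h')\dot- f(s,h')\mid h'\perp h\}$. $[e\mapsto e'](s,h)=0$ if $\mathrm{dom}(h)=\{s(e)\}$ and $h(s(e))=s(e')$, else $\infty$; $[e\mapsto-](s,h)=0$ if $\mathrm{dom}(h)=\{s(e)\}$,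 else $\infty$. *)

(* Defs.v *)
From HB Require Import structures.
From mathcomp Require Import all_boot all_order all_algebra.
From mathcomp Require Import finmap.
From mathcomp Require Import all_classical all_reals ereal.
Set Implicit Arguments. Unset Strict Implicit. Unset Printing Implicit Defensive.
Import Order.TTheory GRing.Theory Num.Theory.
Local Open Scope classical_set_scope.
Local Open Scope fset_scope.
Local Open Scope ereal_scope.

Definition stack (V : finType) := V -> nat.
Definition heap := {fmap nat -> nat}.
Definition valid_heap (h : heap) : Prop := 0%N \notin domf h.
Definition expr (V : finType) := stack V -> nat.

Definition hdisj (h1 h2 : heap) : Prop := [disjoint domf h1 & domf h2].
(* h1 * h2, meaningful when disjoint *)
Definition hunion (h1 h2 : heap) : heap := catf h1 h2.

(* expectations: maps States -> [0, oo] (nonnegativity imposed separately) *)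
Definition expect (R : realType) (V : finType) := stack V -> heap -> \bar R.

Definition tsub (R : realType) (a b : \bar R) : \bar R :=
  if b == +oo then 0 else maxe (a - b) 0.

(* separating conjunction: min over splittings h = h1 * h2 of valid heaps
   (an empty set of splittings gives inf = +oo) *)
Definition sepcon (R : realType) (V : finType) (f g : expect R V) : expect R V :=
  fun s h => ereal_inf [set x | exists h1 h2 : heap,
      [/\ valid_heap h1, valid_heap h2, hdisj h1 h2, h = hunion h1 h2
        & x = f s h1 + g s h2]].

Definition sepimp (R : realType) (V : finType) (f g : expect R V) : expect R V :=
  fun s h => ereal_sup [set x | exists h' : heap,
      [/\ valid_heap h', hdisj h' h & x = tsub (g s (hunion h h')) (f s h')]].

Definition pto (R : realType) (V : finType) (e e' : expr V) : expect R V :=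
  fun s h => if (domf h == [fset e s]) && (fnd h (e s) == Some (e' s)) then 0 else +oo.

Definition pto_any (R : realType) (V : finType) (e : expr V) : expect R V :=
  fun s h => if domf h == [fset e s] then 0 else +oo.

Definition ert_mut (R : realType) (V : finType) (e e' : expr V) (f : expect R V)
  : expect R V :=
  sepcon (pto_any R e) (sepimp (pto R e e') f).

(* Main.v *)
Require Import Defs.
From HB Require Import structures.
From mathcomp Require Import all_boot all_order all_algebra.
From mathcomp Require Import finmap.
From mathcomp Require Import all_classical all_reals ereal.
Local Open Scope fset_scope.
Local Open Scope fmap_scope.
Local Open Scope ereal_scope.
Import Order.TTheory.

Lemma tsub_ge0 (R : realType) (a b : \bar R) : 0 <= tsub a b.
Proof. rewrite /tsub; case: ifP => _; first exact: lexx. by rewrite le_max lexx orbT. Qed.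

Lemma sepimp_ge0 (R : realType) (V : finType) (g f : expect R V) s h :
  0 <= sepimp g f s h.
Proof.
apply: le_trans (ereal_sup_ubound _); last first.
  exists [fmap]; split; [ | | reflexivity].
  - by rewrite /valid_heap.
  - by apply/fdisjointP => a; rewrite inE.
exact: tsub_ge0.
Qed.

Lemma sepimp_val (R : realType) (V : finType) (e e' : expr V) (f : expect R V)
    (f_nneg : forall (s : stack V) (h : heap), valid_heap h -> (0%E <= f s h)%E)
    s (h2 : heap) : valid_heap h2 -> e s != 0%N -> e s \notin domf h2 ->
  sepimp (pto R e e') f s h2 = f s h2.[e s <- e' s].
Proof.
move=> v2 l0 ln.
have vs : valid_heap h2.[e s <- e' s].
  by rewrite /valid_heap dom_setf !inE negb_or eq_sym l0.
apply/le_anti/andP; split.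
- apply: ge_ereal_sup => x [h' [vh' dj ->]].
  rewrite /pto; case: ifP => [/andP [/eqP dh' /eqP fh'] | _]; last first.
    by rewrite /tsub eqxx; apply: f_nneg.
  rewrite /tsub.
  have -> : hunion h2 h' = h2.[e s <- e' s].
    have dk : forall k, (k \in domf h') = (k == e s) by move=> k; rewrite dh' inE.
    apply/fmapP => k; rewrite fnd_cat fnd_set dk.
    by case: eqP => [->|].
  by rewrite /= sube0 ge_max lexx f_nneg.
- apply: ereal_sup_ubound; exists [fmap].[e s <- e' s]; split.
  + by rewrite /valid_heap dom_setf !inE negb_or eq_sym l0.
  + apply/fdisjointP => a; rewrite dom_setf !inE orbF => /eqP ->; exact: ln.
  + have -> : hunion h2 [fmap].[e s <- e' s] = h2.[e s <- e' s].
      apply/fmapP => k; rewrite fnd_cat fnd_set dom_setf !inE orbF.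
      by case: eqP => [->|kl]; rewrite ?fnd_set ?eqxx //; case: eqP.
    have -> : pto R e e' s [fmap].[e s <- e' s] = 0.
      rewrite /pto fnd_set !eqxx andbT; case: eqP => // dn; exfalso; apply: dn.
      by apply/fsetP => a; rewrite dom_setf !inE orbF.
    rewrite /tsub /=.
    by rewrite sube0; apply/esym/max_idPl; apply: f_nneg.
Qed.

Theorem mainTheorem14 (R : realType) (V : finType) (e e' : expr V)
    (f : expect R V)
    (f_nneg : forall (s : stack V) (h : heap), valid_heap h -> (0%E <= f s h)%E)
    (s : stack V) (h : heap) (hv : valid_heap h) :
  ert_mut e e' f s h =
    if e s \in domf h then f s h.[e s <- e' s] else +oo.
Proof.
rewrite /ert_mut /sepcon.
have big : forall h1 h2, valid_heap h1 -> valid_heap h2 -> hdisj h1 h2 ->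
    h = hunion h1 h2 ->
    (if e s \in domf h then f s h.[e s <- e' s] else +oo) <=
    pto_any R e s h1 + sepimp (pto R e e') f s h2.
  move=> h1 h2 v1 v2 dj hE.
  rewrite /pto_any; case: (eqVneq (domf h1) [fset e s]) => [d1|_]; last first.
    by rewrite addye ?leey // gt_eqF // (lt_le_trans _ (sepimp_ge0 _ _ _ _ _ _)) ?ltNy0.
  have l1 : e s \in domf h1 by rewrite d1 inE.
  have lh : e s \in domf h by rewrite hE domf_cat inE l1.
  have ln : e s \notin domf h2 by move/fdisjointP: dj; apply.
  have l0 : e s != 0%N by apply: contraNneq hv => <-.
  rewrite lh add0e sepimp_val //.
  have -> : h2.[e s <- e' s] = h.[e s <- e' s]; last exact: lexx.
  apply/fmapP => k; rewrite !fnd_set hE fnd_cat; case: eqP => // /eqP kl.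
  case: ifP => // kn; rewrite !not_fnd ?kn //.
  have kn1 : k \notin domf h1 by rewrite d1 inE.
  exact: kn1.
apply/le_anti/andP; split; last first.
  by apply: le_ereal_inf_tmp => x [h1 [h2 [v1 v2 dj hE ->]]]; exact: big.
case: ifP => lh; last exact: leey.
pose h1 : heap := [fmap].[e s <- h.[lh]].
pose h2 : heap := h.[~ e s].
have l0 : e s != 0%N by apply: contraNneq hv => <-.
have ln : e s \notin domf h2 by rewrite domf_rem !inE eqxx.
apply: ereal_inf_lbound.
exists h1, h2; split.
- by rewrite /valid_heap dom_setf !inE negb_or eq_sym l0.
- by rewrite /valid_heap domf_rem !inE negb_and (negbTE hv) orbT.
- rewrite /hdisj; apply/fdisjointP => a; rewrite dom_setf !inE orbF => /eqP ->. by rewrite eqxx /= andbF.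
- apply/fmapP => k; rewrite fnd_cat fnd_rem1 domf_rem !inE fnd_set.
  case: (eqVneq k (e s)) => [->|kl] /=; first by rewrite in_fnd.
  by case: ifP => // kn; rewrite !not_fnd ?kn ?inE.
- have -> : pto_any R e s h1 = 0.
    rewrite /pto_any; case: eqP => // dn; exfalso; apply: dn.
    by apply/fsetP => a; rewrite dom_setf !inE orbF.
  rewrite add0e sepimp_val //.
    by congr (f s _); apply/fmapP => k; rewrite !fnd_set fnd_rem1; case: eqP.
  by rewrite /valid_heap domf_rem !inE negb_and (negbTE hv) orbT.
Qed.
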